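(* Let $G\in\mathcal{G}(\widehat{C}_6,\widehat{C}_7)$ and $xy\in E(G)$. Then $xy$ is a relating edge if and only if there exist an independent set $S_x\subseteq N_2(x)\setminus N(y)$ which dominates $N(x)\cap N_2(y)$, and an independent set $S_y\subseteq N_2(y)\setminus N(x)$ which dominates $N(y)\cap N_2(x)$.
   Context: All graphs are finite, simple and undirected. $\mathcal{G}(\widehat{C}_6,\widehat{C}_7)$ is the family of graphs with no subgraph (not necessarily induced) isomorphic to $C_6$ or $C_7$. $N_i(v)$ is the set of vertices at distance exactly $i$ from $v$, $N(v)=N_1(v)$; a set $S$ dominates $T$ if every vertex of $T$ is in $S$ or adjacent to a vertex of $S$. An edge $xy$ is relating if there exists an independent set $S$, containing neither $x$ nor $y$, such that both $S\cup\{x\}$ and $S\cup\{y\}$ are maximal independent sets of $G$. *)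

(* Defs.v *)
From mathcomp Require Import all_boot.
Set Implicit Arguments. Unset Strict Implicit. Unset Printing Implicit Defensive.

(* A finite simple graph on vertex type T : adjacency relation g,
   required (in the theorem) to be symmetric and irreflexive. *)

Section Graphs.
Variable T : finType.
Variable g : rel T.

Definition has_cycle_subgraph (k : nat) : Prop :=
  exists f : nat -> T,
    {in [pred i | i < k] &, injective f} /\
    forall i, i < k -> g (f i) (f (i.+1 %% k)).

Definition nbhd (v : T) : {set T} := [set u | g v u].

Definition nbhd2 (v : T) : {set T} :=
  [set u | [&& u != v, ~~ g v u & [exists w, g v w && g w u]]].

Definition independent (S : {set T}) : bool :=
  [forall u in S, forall w in S, ~~ g u w].

Definition maximal_independent (S : {set T}) : bool :=
  independent S &&
  [forall v, (v \notin S) ==> ~~ independent (v |: S)].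

Definition dominates (S U : {set T}) : bool :=
  [forall u in U, (u \in S) || [exists s in S, g s u]].

Definition relating (x y : T) : Prop :=
  exists S : {set T}, [/\ independent S, x \notin S, y \notin S,
    maximal_independent (x |: S) & maximal_independent (y |: S)].

End Graphs.

(* Main.v *)
Require Import Defs.
From mathcomp Require Import all_boot.
Set Implicit Arguments. Unset Strict Implicit.

Lemma indepP (T : finType) (g : rel T) (S : {set T}) :
  reflect (forall u w, u \in S -> w \in S -> ~~ g u w) (independent g S).
Proof.
apply: (iffP forall_inP) => H.
- by move=> u w uS wS; move/forall_inP: (H u uS) => /(_ w wS).
- by move=> u uS; apply/forall_inP=> w wS; exact: H.
Qed.

Lemma max_intro (T : finType) (g : rel T) (S : {set T}) :
  independent g S -> (forall v, v \notin S -> exists2 s, s \in S & g v s) ->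
  maximal_independent g S.
Proof.
move=> iS H; apply/andP; split=> //; apply/forallP=> v; apply/implyP=> vS.
have [s sS gvs] := H v vS; apply/indepP => /(_ v s).
by rewrite setU11 setU1r // gvs => /(_ isT isT).
Qed.

Lemma nindep (T : finType) (g : rel T) (gsym : symmetric g) (girr : irreflexive g)
  (S : {set T}) v :
  independent g S -> ~~ independent g (v |: S) -> exists2 s, s \in S & g v s.
Proof.
move=> iS niS; case: (boolP [exists s in S, g v s]) => [/exists_inP//|/exists_inP ne].
case/negP: niS; apply/indepP => u w; rewrite !in_setU1.
case/predU1P=> [->|uS]; case/predU1P=> [->|wS].
- by rewrite girr.
- by apply/negP=> gvw; apply: ne; exists w.
- by apply/negP=> guv; apply: ne; exists u; rewrite // gsym.
- by move/indepP: iS; apply.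
Qed.

Lemma max_elim (T : finType) (g : rel T) (gsym : symmetric g) (girr : irreflexive g)
  (S : {set T}) :
  maximal_independent g S -> forall v, v \notin S -> exists2 s, s \in S & g v s.
Proof.
case/andP=> iS /forallP H v vS; apply: nindep => //.
by move/implyP: (H v); apply.
Qed.

Lemma fwd (T : finType) (g : rel T) (gsym : symmetric g) (girr : irreflexive g)
  (x y : T) (hxy : g x y) : relating g x y ->
  exists Sx : {set T}, [/\ independent g Sx,
      Sx \subset nbhd2 g x :\: nbhd g y &
      dominates g Sx (nbhd g x :&: nbhd2 g y)].
Proof.
case=> S [iS xS yS mx my].
have nx : forall s, s \in S -> ~~ g x s.
  move=> s sS; case/andP: mx => /indepP H _; apply: H; rewrite ?setU11 //.
  by rewrite setU1r.
have ny : forall s, s \in S -> ~~ g y s.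
  move=> s sS; case/andP: my => /indepP H _; apply: H; rewrite ?setU11 //.
  by rewrite setU1r.
exists (S :&: (nbhd2 g x :\: nbhd g y)); split.
- by apply/indepP=> u w /setIP[uS _] /setIP[wS _]; move/indepP: iS; apply.
- exact: subsetIr.
apply/forall_inP=> u /setIP[]; rewrite !inE => gxu /and3P[uy ngyu _].
have uS : u \notin y |: S.
  rewrite in_setU1 negb_or uy /=; by apply/negP=> uS; rewrite (negbTE (nx u uS)) in gxu.
have [s] := max_elim gsym girr my uS.
rewrite in_setU1 => /predU1P[->|sS] gus; first by rewrite gsym gus in ngyu.
apply/orP; right; apply/exists_inP; exists s; last by rewrite gsym.
rewrite !inE ny // nx // /=.
rewrite sS /=; apply/andP; split; first by apply/eqP=> sx; rewrite -sx sS in xS.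
by apply/existsP; exists u; rewrite gxu.
Qed.

Lemma maxside (T : finType) (g : rel T) (gsym : symmetric g) (girr : irreflexive g)
  (x y : T) (hxy : g x y) (S : {set T}) :
  independent g S ->
  (forall s, s \in S -> s != x) -> (forall s, s \in S -> ~~ g x s) ->
  (forall v, g y v -> ~~ g x v -> v != x -> exists2 s, s \in S & g v s) ->
  (forall v, v != x -> v != y -> ~~ g x v -> ~~ g y v -> v \notin S ->
     exists2 s, s \in S & g v s) ->
  maximal_independent g (x |: S).
Proof.
move=> iS sx nx dy mV; apply: max_intro.
  apply/indepP=> u w; rewrite !in_setU1.
  case/predU1P=> [->|uS]; case/predU1P=> [->|wS].
  - by rewrite girr.
  - exact: nx.
  - by rewrite gsym nx.
  - by move/indepP: iS; apply.
move=> v; rewrite in_setU1 negb_or => /andP[vx vS].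
case gxv: (g x v); first by exists x; rewrite ?setU11 // gsym.
have vy : v != y by apply/eqP=> e; rewrite e hxy in gxv.
case gyv: (g y v).
  by have [s sS gvs] := dy v gyv (negbT gxv) vx; exists s; rewrite ?setU1r.
have [s sS gvs] := mV v vx vy (negbT gxv) (negbT gyv) vS.
by exists s; rewrite ?setU1r.
Qed.

Lemma c6 (T : finType) (g : rel T) (gsym : symmetric g)
  (t x y v w u : T) :
  t != x -> t != y -> t != v -> t != w -> t != u ->
  x != y -> x != v -> x != w -> x != u ->
  y != v -> y != w -> y != u -> v != w -> v != u -> w != u ->
  g t x -> g x y -> g y v -> g v w -> g w u -> g u t ->
  has_cycle_subgraph g 6.
Proof.
move=> h1 h2 h3 h4 h5 h6 h7 h8 h9 h10 h11 h12 h13 h14 h15 e1 e2 e3 e4 e5 e6.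
have U : uniq [:: t; x; y; v; w; u].
  by rewrite /= !inE !negb_or h1 h2 h3 h4 h5 h6 h7 h8 h9 h10 h11 h12 h13 h14 h15.
exists (fun i => nth t [:: t; x; y; v; w; u] i); split.
  by move=> i j hi hj /eqP; rewrite nth_uniq // => /eqP.
by case=> [|[|[|[|[|[|i]]]]]].
Qed.

Lemma memN2 (T : finType) (g : rel T) x y a :
  a \in nbhd2 g x :\: nbhd g y ->
  [/\ a != x, ~~ g x a, ~~ g y a & exists2 t, g x t & g t a].
Proof.
rewrite !inE => /andP[ngya /and3P[ax ngxa /existsP[t /andP[h1 h2]]]].
by split=> //; exists t.
Qed.

Lemma cross (T : finType) (g : rel T) (gsym : symmetric g) (girr : irreflexive g)
  (noC6 : ~ has_cycle_subgraph g 6) x y (hxy : g x y) a b v :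
  a \in nbhd2 g x :\: nbhd g y -> b \in nbhd2 g y :\: nbhd g x ->
  g y v -> v != x -> ~~ g x v -> g b v -> ~~ g a b.
Proof.
move=> /memN2[ax ngxa ngya [t gxt gta]] /memN2[bny ngyb ngxb _] gyv vx ngxv gbv.
apply/negP=> gab; apply: noC6.
apply: (c6 gsym (t:=t) (x:=x) (y:=y) (v:=v) (w:=b) (u:=a)).
all: try by rewrite // gsym.
all: try by rewrite eq_sym.
all: apply/eqP=> e; subst.
all: try match goal with H : is_true (_ ?p ?p) |- _ => by rewrite girr in H end.
all: match goal with H : is_true (~~ _), H2 : is_true _ |- _ => first [by rewrite H2 in H | by rewrite gsym H2 in H] end.

Qed.

Theorem lemma3p1 (T : finType) (g : rel T)
  (gsym : symmetric g) (girr : irreflexive g)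
  (noC6 : ~ has_cycle_subgraph g 6) (noC7 : ~ has_cycle_subgraph g 7)
  (x y : T) (hxy : g x y) :
  relating g x y <->
  (exists Sx : {set T}, [/\ independent g Sx,
      Sx \subset nbhd2 g x :\: nbhd g y &
      dominates g Sx (nbhd g x :&: nbhd2 g y)]) /\
  (exists Sy : {set T}, [/\ independent g Sy,
      Sy \subset nbhd2 g y :\: nbhd g x &
      dominates g Sy (nbhd g y :&: nbhd2 g x)]).
Proof.
have hyx : g y x by rewrite gsym.
split.
  move=> R; split; first exact: fwd.
  apply: fwd => //; case: R => S [iS xS yS mx my]; by exists S; split.
case=> [[Sx [iSx sSx dSx]] [Sy [iSy sSy dSy]]].
pose Sy' := [set b in Sy | [exists v, [&& g y v, v != x, ~~ g x v & g b v]]].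
pose V' := [set s | [&& s != x, s != y, ~~ g x s & ~~ g y s]].
pose P := [pred S : {set T} | independent g S && (S \subset V')].
have inSx : forall a, a \in Sx -> a \in nbhd2 g x :\: nbhd g y.
  by move=> a aS; apply: (subsetP sSx).
have inSy : forall a, a \in Sy -> a \in nbhd2 g y :\: nbhd g x.
  by move=> a aS; apply: (subsetP sSy).
have P0 : P (Sx :|: Sy').
  rewrite inE; apply/andP; split.
    apply/indepP=> u w; rewrite !inE.
    case/orP=> [uS|/andP[uS /existsP[v /and4P[h1 h2 h3 h4]]]];
    case/orP=> [wS|/andP[wS /existsP[v' /and4P[h1' h2' h3' h4']]]].
    - by move/indepP: iSx; apply.
    - exact: (cross gsym girr noC6 hxy (inSx _ uS) (inSy _ wS) h1' h2' h3' h4').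
    - by rewrite gsym; exact: (cross gsym girr noC6 hxy (inSx _ wS) (inSy _ uS) h1 h2 h3 h4).
    - by move/indepP: iSy; apply.
  apply/subsetP=> s; rewrite !inE => /orP[/inSx /memN2[h1 h2 h3 _]|/andP[/inSy /memN2[h1 h2 h3 _] _]].
    rewrite h1 h2 h3 /= andbT; apply/eqP=> e; move: h2; by rewrite e hxy.
  rewrite h1 h2 h3 /= andbT; apply/eqP=> e; move: h2; by rewrite e hyx.
have [S /maxsetP[/andP[iS sV] maxS] S0S] := maxset_exists P0.
have inV : forall s, s \in S -> [&& s != x, s != y, ~~ g x s & ~~ g y s].
  by move=> s sS; move: (subsetP sV s sS); rewrite inE.
have mV : forall v, v != x -> v != y -> ~~ g x v -> ~~ g y v -> v \notin S ->
     exists2 s, s \in S & g v s.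
  move=> v h1 h2 h3 h4 vS; apply: nindep => //; apply/negP=> iv.
  have e := maxS (v |: S); rewrite inE iv /= in e.
  have : v |: S = S.
    apply: e; last exact: subsetUr.
    by apply/subsetP=> s; rewrite in_setU1 => /predU1P[->|/(subsetP sV)//]; rewrite inE h1 h2 h3 h4.
  by move=> e'; move: vS; rewrite -e' setU11.
exists S; split => //.
- by apply/negP=> /inV; rewrite eqxx.
- by apply/negP=> /inV; rewrite eqxx andbF.
- apply: (maxside gsym girr hxy) => //.
  + by move=> s /inV /and4P[].
  + by move=> s /inV /and4P[].
  + move=> v gyv ngxv vx.
    have vB : v \in nbhd g y :&: nbhd2 g x.
      by rewrite !inE gyv vx ngxv /=; apply/existsP; exists y; rewrite hxy.
    move/forall_inP: dSy => /(_ v vB) /orP [/inSy|/exists_inP[b bS gbv]].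
      by case/memN2=> _; rewrite gyv.
    exists b; last by rewrite gsym.
    apply: (subsetP S0S); rewrite !inE bS /=; apply/orP; right.
    by apply/existsP; exists v; rewrite gyv vx ngxv gbv.
- apply: (maxside gsym girr hyx) => //.
  + by move=> s /inV /and4P[].
  + by move=> s /inV /and4P[].
  + move=> v gxv ngyv vy.
    have vB : v \in nbhd g x :&: nbhd2 g y.
      by rewrite !inE gxv vy ngyv /=; apply/existsP; exists x; rewrite hyx.
    move/forall_inP: dSx => /(_ v vB) /orP [/inSx|/exists_inP[b bS gbv]].
      by case/memN2=> _; rewrite gxv.
    exists b; last by rewrite gsym.
    by apply: (subsetP S0S); rewrite !inE bS.
  + move=> v h1 h2 h3 h4; exact: mV.
Qed.
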